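(* Any discrete quasigroup, and in particular any discrete group, is approximable by finite quasigroups.
   Context: A quasigroup is a set $A$ with a binary operation $\circ$ such that for all $a,b\in A$ each of the equations $a\circ x=b$ and $x\circ a=b$ has a unique solution. $A$ carries the discrete topology. Approximability of a topological algebra $(A,\circ)$ by a class $\mathcal K$ of finite algebras: for a compact $C\subseteq A$, a finite cover $\mathcal U$ of $C$ by open sets, and a finite algebra $(H,\odot)$, a map $j:H\to A$ gives a $(C,\mathcal U)$-approximation if (i) every $U\in\mathcal U$ with $U\cap C\ne\emptyset$ contains a point of $j(H)$, and (ii) for all $x,y\in H$ with $j(x),j(y),j(x)\circ j(y)\in C$ there is $U\in\mathcal U$ containing both $j(x\odot y)$ and $j(x)\circ j(y)$; $A$ is approximable by $\mathcal K$ if for every compact $C$ and finite open cover $\mathcal U$ of $C$ there is a $(C,\mathcal U)$-approximation $(H,j)$ with $H\in\mathcal K$ and $j$ injective. *)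

(* Defs.v *)
From HB Require Import structures.
From mathcomp Require Import all_boot all_order all_algebra.
From mathcomp Require Import all_classical all_reals all_analysis.
Set Implicit Arguments. Unset Strict Implicit. Unset Printing Implicit Defensive.
Local Open Scope classical_set_scope.

Definition is_quasigroup (A : Type) (op : A -> A -> A) : Prop :=
  forall a b : A, (exists! x, op a x = b) /\ (exists! x, op x a = b).

Definition finite_open_cover (T : topologicalType) (C : set T) (U : seq (set T)) : Prop :=
  (forall V, V \in U -> open V) /\ (C `<=` \bigcup_(V in [set V | V \in U]) V).

Definition approximation (T : topologicalType) (op : T -> T -> T)
  (C : set T) (U : seq (set T)) (H : finType) (hop : H -> H -> H) (j : H -> T) : Prop :=
  (forall V, V \in U -> V `&` C !=set0 -> exists h : H, V (j h)) /\
  (forall x y : H, C (j x) -> C (j y) -> C (op (j x) (j y)) ->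
     exists2 V, V \in U & V (j (hop x y)) /\ V (op (j x) (j y))).

Definition approximable_by_finite_quasigroups (T : topologicalType) (op : T -> T -> T) : Prop :=
  forall (C : set T) (U : seq (set T)), compact C -> finite_open_cover C U ->
    exists (H : finType) (hop : H -> H -> H) (j : H -> T),
      is_quasigroup hop /\ injective j /\ approximation op C U hop j.

(* Main.v *)
Require Import Defs.
From mathcomp Require Import all_boot all_order all_algebra.
From mathcomp Require Import all_classical all_reals all_analysis.
From mathcomp Require Import zify.
Set Implicit Arguments. Unset Strict Implicit. Unset Printing Implicit Defensive.

Module Comb.
Local Notation inE := finset.inE (only parsing).
Local Notation properEneq := finset.properEneq (only parsing).
Local Notation set0 := finset.set0 (only parsing).
Local Notation setIidPr := finset.setIidPr (only parsing).
Local Notation sub1set := finset.sub1set (only parsing).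
Local Notation subUset := finset.subUset (only parsing).
Local Notation subsetP := fintype.subsetP (only parsing).
Local Notation subset_trans := fintype.subset_trans (only parsing).

Lemma cardsU_le (T : finType) (A B : {set T}) : #|A :|: B| <= #|A| + #|B|.
Proof. by rewrite cardsU leq_subr. Qed.

Section Hall.
Variables (I J : finType) (R : I -> J -> bool) (j0 : J).

Definition nbh (X : {set I}) (B : {set J}) := [set j in B | [exists i in X, R i j]].

Lemma hall_gen n (A : {set I}) (B : {set J}) : #|A| <= n ->
  (forall X : {set I}, X \subset A -> #|X| <= #|nbh X B|) ->
  exists f : I -> J, {in A &, injective f} /\ forall i, i \in A -> (f i \in B) && R i (f i).
Proof.
elim: n A B => [|n IH] A B.
  rewrite leqn0 cards_eq0 => /eqP A0 _; rewrite A0; exists (fun _ => j0).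
  by split => i; rewrite inE.
move=> cA hallA.
case: (set_0Vmem A) => [A0|[a aA]].
  by exists (fun _ => j0); rewrite A0; split => i; rewrite inE.
case: (boolP [exists X : {set I}, [&& X \subset A, X != set0, X != A & #|nbh X B| <= #|X|]]).
- case/existsP => X0 /and4P [X0A X0n0 X0nA tight].
  have ltX0 : #|X0| < #|A| by rewrite proper_card // properEneq X0nA.
  have [f1 [f1inj f1P]] := IH X0 B (leq_trans ltX0 cA)
                                   (fun X XX0 => hallA X (subset_trans XX0 X0A)).
  set N0 := nbh X0 B.
  have cA2 : #|A :\: X0| <= n.
    have := cardsID X0 A; rewrite (setIidPr X0A) => e.
    have : 0 < #|X0| by rewrite card_gt0.
    lia.
  have hall2 : forall Y : {set I}, Y \subset A :\: X0 -> #|Y| <= #|nbh Y (B :\: N0)|.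
    move=> Y YA.
    have dYX : [disjoint Y & X0].
      apply/pred0P => i /=; apply/negbTE/negP => /andP[iY iX].
      by have := subsetP YA i iY; rewrite inE iX.
    have YXA : Y :|: X0 \subset A.
      by rewrite subUset X0A andbT; apply: subset_trans YA (subsetDl _ _).
    have h1 := hallA _ YXA.
    have h2 : nbh (Y :|: X0) B \subset nbh Y (B :\: N0) :|: N0.
      apply/subsetP => j; rewrite !inE => /andP[jB /existsP[i /andP[]]].
      rewrite inE => /orP[iY|iX] Rij; rewrite jB /=.
        case E: [exists i0 in X0, R i0 j]; first by rewrite orbT.
        rewrite /= ?orbF.
        by apply/existsP; exists i; rewrite iY.
      by apply/orP; right; apply/existsP; exists i; rewrite iX.
    have h3 := leq_trans (subset_leq_card h2) (cardsU_le _ _).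
    have h4 : #|Y :|: X0| = #|Y| + #|X0|.
      by rewrite cardsU; move: dYX; rewrite -setI_eq0 => /eqP ->; rewrite cards0 subn0.
    have tight' : #|N0| <= #|X0| := tight.
    clearbody N0; lia.
  have [f2 [f2inj f2P]] := IH (A :\: X0) (B :\: N0) cA2 hall2.
  exists (fun i => if i \in X0 then f1 i else f2 i); split.
    move=> i i' iA i'A /=.
    have f1N0 : forall k, k \in X0 -> f1 k \in N0.
      move=> k kX; have /andP[kB Rk] := f1P k kX.
      by rewrite inE kB; apply/existsP; exists k; rewrite kX.
    have f2N0 : forall k, k \in A -> k \notin X0 -> f2 k \notin N0.
      move=> k kA kX.
      have /andP[] : (f2 k \in B :\: N0) && R k (f2 k) by apply: f2P; rewrite inE kX kA.
      by rewrite inE => /andP[].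
    case: (boolP (i \in X0)) => iX; case: (boolP (i' \in X0)) => i'X.
    - exact: f1inj.
    - move=> e; have := f2N0 i' i'A i'X; by rewrite -e f1N0.
    - move=> e; have := f2N0 i iA iX; by rewrite e f1N0.
    - by apply: f2inj; rewrite inE ?iX ?i'X.
  move=> i iA; case: ifP => iX; first exact: f1P.
  have /andP[] : (f2 i \in B :\: N0) && R i (f2 i) by apply: f2P; rewrite inE iX iA.
  by rewrite inE => /andP[_ ->] ->.
- move/existsPn => ntight.
  have h1 := hallA [set a]; rewrite sub1set aA cards1 card_gt0 in h1.
  have [b] := set0Pn _ (h1 isT); rewrite inE => /andP[bB /existsP[a' /andP[]]].
  rewrite inE => /eqP -> Rab.
  have cA2 : #|A :\ a| <= n by move: cA; rewrite (cardsD1 a A) aA.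
  have hall2 : forall Y : {set I}, Y \subset A :\ a -> #|Y| <= #|nbh Y (B :\ b)|.
    move=> Y YA.
    case: (set_0Vmem Y) => [->|[y yY]]; first by rewrite cards0.
    have := ntight Y.
    have YA' : Y \subset A by apply: subset_trans YA (subsetDl _ _).
    have Yn0 : Y != set0 by apply/set0Pn; exists y.
    have YnA : Y != A.
      apply/eqP => YA2; have := subsetP YA a; rewrite YA2 aA => /(_ isT).
      by rewrite !inE eqxx.
    rewrite YA' Yn0 YnA /= -ltnNge => lt.
    have h2 : nbh Y B \subset nbh Y (B :\ b) :|: [set b].
      apply/subsetP => j; rewrite !inE => /andP[jB ->].
      by case: (j == b); rewrite ?orbT // jB.
    have h3 := leq_trans (subset_leq_card h2) (cardsU_le _ _).
    rewrite cards1 in h3; lia.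
  have [f2 [f2inj f2P]] := IH (A :\ a) (B :\ b) cA2 hall2.
  exists (fun i => if i == a then b else f2 i); split.
    move=> i i' iA i'A /=.
    have f2b : forall k, k \in A -> k != a -> f2 k != b.
      move=> k kA ka.
      have /andP[] : (f2 k \in B :\ b) && R k (f2 k) by apply: f2P; rewrite !inE ka kA.
      by rewrite !inE => /andP[].
    case: (eqVneq i a) => [->|ia]; case: (eqVneq i' a) => [->|i'a] //.
    - move=> e; have := f2b i' i'A i'a; by rewrite -e eqxx.
    - move=> e; have := f2b i iA ia; by rewrite e eqxx.
    - by apply: f2inj; rewrite !inE ?ia ?i'a.
  move=> i iA; case: (eqVneq i a) => [->|ia]; first by rewrite bB.
  have /andP[] : (f2 i \in B :\ b) && R i (f2 i) by apply: f2P; rewrite !inE ia iA.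
  by rewrite !inE => /andP[_ ->] ->.
Qed.
End Hall.
Section Latin.
Variable N : nat.
Notation I := 'I_N.
Implicit Types (F G : I -> I -> option I).

Definition rowinj F := forall r c c', F r c = F r c' -> F r c != None -> c = c'.
Definition colinj F := forall r r' c, F r c = F r' c -> F r c != None -> r = r'.
Definition extends F G := forall r c s, F r c = Some s -> G r c = Some s.

Definition Ecells F r := [set c | F r c == None].
Definition Ssyms F r := [set s | [forall c, F r c != Some s]].
Definition Rel F (c s : I) := [forall r', F r' c != Some s].

Lemma fill_row F (r : I) : rowinj F -> colinj F ->
  (forall X : {set I}, X \subset Ecells F r -> #|X| <= #|nbh (Rel F) X (Ssyms F r)|) ->
  exists G, [/\ rowinj G, colinj G, extends F G, (forall c, G r c != None) &
     (forall r' c, r' != r -> G r' c = F r' c)].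
Proof.
move=> ri ci hallc.
have [f [finj fP]] := hall_gen r (leqnn _) hallc.
pose G r' c := if (r' == r) && (F r c == None) then Some (f c) else F r' c.
have fS : forall c, F r c = None -> forall c', F r c' != Some (f c).
  move=> c e; have := fP c; rewrite inE e eqxx => /(_ isT) /andP[].
  by rewrite inE => /forallP.
have fR : forall c, F r c = None -> forall r', F r' c != Some (f c).
  move=> c e; have := fP c; rewrite inE e eqxx => /(_ isT) /andP[_].
  by move/forallP.
exists G; split.
- move=> r1 c c'; rewrite /G.
  case: (eqVneq r1 r) => [->|_] /=; last by apply: ri.
  case e1: (F r c == None); case e2: (F r c' == None) => //=.
  + move=> [] fe _; apply: finj fe; by rewrite inE ?e1 ?e2.
  + move=> fe _; have := fS c (eqP e1) c'; by rewrite -fe eqxx.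
  + move=> fe _; have := fS c' (eqP e2) c; by rewrite fe eqxx.
  + by apply: ri.
- move=> r1 r2 c; rewrite /G.
  case: (eqVneq r1 r) => [->|r1r]; case: (eqVneq r2 r) => [->|r2r] //=.
  + case e1: (F r c == None) => /= fe nn; last by apply: ci fe nn.
    have := fR c (eqP e1) r2; by rewrite -fe eqxx.
  + case e1: (F r c == None) => /= fe nn; last by apply: ci fe nn.
    have := fR c (eqP e1) r1; by rewrite fe eqxx.
  + by apply: ci.
- move=> r1 c s e; rewrite /G; case: (eqVneq r1 r) => [er|nr] /=; [by rewrite -er e | by rewrite e].
- move=> c; rewrite /G eqxx /=; case E: (F r c == None) => //; by rewrite E.
- move=> r' c r'r; by rewrite /G (negbTE r'r).
Qed.


Lemma card_lt k : k <= N -> #|[set i : I | i < k]| = k.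
Proof.
move=> kN.
have -> : [set i : I | i < k] = [set widen_ord kN i | i in 'I_k].
  apply/setP => i; rewrite inE; apply/idP/imsetP => [ik|[j _ ->]] //=.
  by exists (Ordinal ik) => //; apply: val_inj.
rewrite card_in_imset ?card_ord //.
by move=> a b _ _ /(congr1 val) /= e; apply: val_inj.
Qed.

Lemma subC_card (A B : {set I}) : ~: A \subset B -> N - #|B| <= #|A|.
Proof.
move=> /subset_leq_card h; have := cardsC A; rewrite card_ord; lia.
Qed.

Lemma hall_phase2 G (r : I) : rowinj G -> colinj G ->
  (forall (r' : I) c, r' < r -> G r' c != None) -> (forall (r' : I) c, r <= r' -> G r' c = None) ->
  forall X : {set I}, X \subset Ecells G r -> #|X| <= #|nbh (Rel G) X (Ssyms G r)|.
Proof.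
move=> ri ci full emp X XE.
set k := val r.
have kN : k <= N by apply: ltnW; exact: ltn_ord.
have degc : forall c, N - k <= #|[set s | Rel G c s]|.
  move=> c.
  have sub : ~: [set s | Rel G c s] \subset
      [set odflt r' (G r' c) | r' in [set r' : I | r' < k]].
    apply/subsetP => s; rewrite !inE => /forallPn [r' /negPn /eqP e].
    apply/imsetP; exists r'; last by rewrite /= e.
    rewrite inE ltnNge; apply/negP => /(emp r' c); by rewrite e.
  have := subC_card sub.
  have := leq_imset_card (fun r' => odflt r' (G r' c)) [set r' : I | r' < k].
  rewrite card_lt // => h1 h2; apply: leq_trans h2; exact: leq_sub2l.
have degs : forall s, #|[set c | Rel G c s]| <= N - k.
  move=> s.
  pose g r' := odflt r [pick c | G r' c == Some s].
  have gP : forall r' : I, r' < k -> G r' (g r') = Some s.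
    move=> r' r'k; rewrite /g; case: pickP => [c /eqP //|none].
    pose h c := odflt r (G r' c).
    have hinj : injective h.
      move=> c1 c2; rewrite /h.
      have := full r' c1 r'k; have := full r' c2 r'k.
      case e1: (G r' c1) => [a|] //; case e2: (G r' c2) => [b|] // _ _ /= ab.
      by apply: (ri r' c1 c2); rewrite e1 ?e2 ?ab.
    have [hi hK Kh] := injF_bij hinj.
    have := none (hi s); rewrite /h in Kh; have := Kh s.
    have := full r' (hi s) r'k.
    by case: (G r' (hi s)) => [a|] //= _ ->; rewrite eqxx.
  have sub : [set g r' | r' in [set r' : I | r' < k]] \subset ~: [set c | Rel G c s].
    apply/subsetP => c /imsetP [r' r'k ->]; rewrite inE in r'k.
    rewrite !inE negb_forall; apply/existsP; exists r'; by rewrite gP // eqxx.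
  have := subset_leq_card sub; rewrite card_in_imset; last first.
    move=> r1 r2; rewrite !inE => r1k r2k e.
    apply: (ci r1 r2 (g r1)); first by rewrite {2}e !gP.
    by rewrite gP.
  rewrite card_lt // => h.
  have := cardsC [set c | Rel G c s]; rewrite card_ord; lia.
have mpos : 0 < N - k by rewrite subn_gt0 ltn_ord.
rewrite -(leq_pmul2r mpos).
apply: (@leq_trans (\sum_(c in X) #|[set s | Rel G c s]|)).
  by rewrite -sum_nat_const; apply: leq_sum => c _; exact: degc.
apply: (@leq_trans (\sum_(s in nbh (Rel G) X (Ssyms G r)) #|[set c | Rel G c s]|)); last first.
  by rewrite -sum_nat_const; apply: leq_sum => s _; exact: degs.
under eq_bigr do rewrite -sum1dep_card.
rewrite (exchange_big_dep (fun s => s \in nbh (Rel G) X (Ssyms G r))) /=; last first.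
  move=> c s cX Rcs; rewrite inE; apply/andP; split.
    by rewrite inE; apply/forallP => c'; rewrite emp.
  by apply/existsP; exists c; rewrite cX.
apply: leq_sum => s _; rewrite sum1dep_card.
by apply: subset_leq_card; apply/subsetP => c; rewrite !inE => /andP[].
Qed.


Lemma hall_phase1 G (r : I) n : rowinj G -> colinj G ->
  (forall (r' : I) c, G r' c != None -> r' < n) -> (forall c, G r c != None -> c < n) ->
  3 * n <= N ->
  forall X : {set I}, X \subset Ecells G r -> #|X| <= #|nbh (Rel G) X (Ssyms G r)|.
Proof.
move=> ri ci rowsn coln n3 X XE.
have nN : n <= N by lia.
set S := Ssyms G r; set E := Ecells G r.
have cE : #|E| <= #|S|.
  have sub : ~: S \subset [set odflt c (G r c) | c in ~: E].
    apply/subsetP => s; rewrite !inE negb_forall => /existsP [c /negPn /eqP e].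
    apply/imsetP; exists c; last by rewrite /= e.
    by rewrite !inE e.
  have := subset_leq_card sub; have := leq_imset_card (fun c => odflt c (G r c)) (~: E).
  have := cardsC E; have := cardsC S; rewrite card_ord => h1 h2 h3 h4.
  have := leq_trans h4 h3; lia.
have cS : N - n <= #|S|.
  have sub : ~: S \subset [set odflt c (G r c) | c in [set c : I | c < n]].
    apply/subsetP => s; rewrite !inE negb_forall => /existsP [c /negPn /eqP e].
    apply/imsetP; exists c; last by rewrite /= e.
    by rewrite !inE coln // e.
  have := subC_card sub.
  have := leq_imset_card (fun c => odflt c (G r c)) [set c : I | c < n].
  rewrite card_lt // => h1 h2; apply: leq_trans h2; exact: leq_sub2l.
case: (set_0Vmem X) => [->|[c0 c0X]]; first by rewrite cards0.
have nb1 : #|S| - n <= #|nbh (Rel G) X S|.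
  pose Cs := [set odflt r' (G r' c0) | r' in [set r' : I | r' < n]].
  have sub : S :\: Cs \subset nbh (Rel G) X S.
    apply/subsetP => s; rewrite !inE => /andP[sCs sS]; rewrite sS /=.
    apply/existsP; exists c0; rewrite c0X /=; apply/forallP => r'.
    apply/negP => /eqP e; move/negP: sCs; apply; apply/imsetP; exists r'; last by rewrite /= e.
    by rewrite inE (rowsn r' c0) // e.
  have := subset_leq_card sub; rewrite cardsD.
  have := leq_imset_card (fun r' => odflt r' (G r' c0)) [set r' : I | r' < n].
  rewrite card_lt // => h1 h2; apply: leq_trans h2; apply: leq_sub2l.
  by apply: leq_trans (subset_leq_card (subsetIr _ _)) h1.
have nb2 : n < #|X| -> #|S| <= #|nbh (Rel G) X S|.
  move=> nX; apply: subset_leq_card; apply/subsetP => s sS.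
  rewrite inE sS /=; apply: contraT => /existsPn nos.
  pose g r' := odflt r [pick c | G r' c == Some s].
  have sub : X \subset [set g r' | r' in [set r' : I | r' < n]].
    apply/subsetP => c cX; have := nos c; rewrite cX /= negb_forall.
    case/existsP => r' /negPn /eqP e; apply/imsetP; exists r'.
      by rewrite inE (rowsn r' c) // e.
    rewrite /g; case: pickP => [c' /eqP e'|none]; last by have := none c; rewrite e eqxx.
    rewrite /=; apply: (ri r' c c'); by rewrite ?e ?e'.
  have := subset_leq_card sub.
  have := leq_imset_card g [set r' : I | r' < n].
  rewrite card_lt // => h1 h2; have := leq_trans h2 h1; lia.
have XE' := subset_leq_card XE.
case: (leqP #|X| n) => h.
  lia.
apply: leq_trans (nb2 h); exact: leq_trans XE' cE.
Qed.


Lemma complete F n : rowinj F -> colinj F ->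
  (forall (r : I) c, n <= r -> F r c = None) -> (forall r c, F r c != None -> c < n) ->
  (3 * n <= N \/ forall (r : I) c, r < n -> F r c != None) ->
  exists G, [/\ rowinj G, colinj G, extends F G & forall r c, G r c != None].
Proof.
move=> riF ciF emptyF colF hyp.
suff H : forall k, k <= N -> exists G, [/\ rowinj G, colinj G, extends F G,
    (forall (r : I) c, r < k -> G r c != None) & (forall (r : I) c, k <= r -> G r c = F r c)].
  have [G [ri ci ext full _]] := H N (leqnn N); exists G; split => // r c.
  by apply: full; exact: ltn_ord.
elim => [|k IH] kN.
  by exists F; split.
have [G [ri ci ext full same]] := IH (ltnW kN).
pose r : I := Ordinal kN.
have hallc : forall X : {set I}, X \subset Ecells G r -> #|X| <= #|nbh (Rel G) X (Ssyms G r)|.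
  case: (leqP n k) => nk.
    apply: hall_phase2 => //.
    by move=> r' c hr; rewrite same // emptyF //; apply: leq_trans nk hr.
  case: hyp => [n3|fullF].
    apply: (hall_phase1 (n := n)) => //.
      move=> r' c; case: (ltnP r' k) => [r'k _|kr']; first exact: ltn_trans r'k nk.
      rewrite same //; case: (ltnP r' n) => // nr'; by rewrite emptyF.
    by move=> c; rewrite same //; apply: colF.
  have E0 : Ecells G r = set0.
    by apply/setP => c; rewrite !inE same //= (negbTE (fullF r c nk)).
  by rewrite E0 => X /subset_leq_card; rewrite cards0 leqn0 => /eqP ->.
have [G' [ri' ci' ext' fullr other]] := fill_row ri ci hallc.
exists G'; split => //.
- by move=> r' c s e; apply: ext'; apply: ext.
- move=> r' c; case: (eqVneq r' r) => [->|r'r] hk; first exact: fullr.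
  rewrite other //; apply: full.
  have ne : val r' != k by apply/eqP => e; move/eqP: r'r; apply; apply: val_inj; exact: e.
  by rewrite ltn_neqAle ne -ltnS.
- move=> r' c kr'; rewrite other; first by apply: same; exact: ltnW.
  by apply/eqP => e; move: kr'; rewrite e /= ltnn.
Qed.

End Latin.
Lemma latin_quasi N (L : 'I_N -> 'I_N -> 'I_N) :
  (forall r, injective (L r)) -> (forall c, injective (L^~ c)) -> is_quasigroup L.
Proof.
move=> ri ci a b; split.
- have [g _ K] := injF_bij (ri a); exists (g b); split => [|x e]; first exact: K.
  by apply: (ri a); rewrite K e.
- have [g _ K] := injF_bij (ci a); exists (g b); split => [|x e]; first exact: K.
  by apply: (ci a); rewrite /= K e.
Qed.

Section Core.
Variables (T : eqType) (op : T -> T -> T).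
Hypothesis qop : is_quasigroup op.

Lemma lcancel a x y : op a x = op a y -> x = y.
Proof.
move=> e; have [[z [_ U]] _] := qop a (op a x).
by rewrite -(U x erefl) (U y (esym e)).
Qed.

Lemma rcancel a x y : op x a = op y a -> x = y.
Proof.
move=> e; have [_ [z [_ U]]] := qop a (op x a).
by rewrite -(U x erefl) (U y (esym e)).
Qed.

Lemma core (u : seq T) n (C : T -> Prop) :
  uniq u -> n <= size u -> (3 * n <= size u \/ (n = size u /\ forall x, x \in u)) ->
  (forall x, C x -> index x u < n) ->
  exists hop : 'I_(size u) -> 'I_(size u) -> 'I_(size u),
    [/\ is_quasigroup hop, injective (tnth (in_tuple u)),
      (forall x y, C (tnth (in_tuple u) x) -> C (tnth (in_tuple u) y) ->
         C (op (tnth (in_tuple u) x) (tnth (in_tuple u) y)) ->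
         tnth (in_tuple u) (hop x y) = op (tnth (in_tuple u) x) (tnth (in_tuple u) y)) &
      (forall c, C c -> exists h, tnth (in_tuple u) h = c)].
Proof.
move=> uu nN hyp Cn.
set N := size u.
set j := tnth (in_tuple u).
have jinj : injective j by apply/tuple_uniqP.
have jidx : forall i : 'I_N, index (j i) u = i.
  by move=> i; rewrite /j (tnth_nth (tnth (in_tuple u) i)) index_uniq.
have idxj : forall (v : T) (i : 'I_N), index v u = i -> j i = v.
  move=> v i e; rewrite /j (tnth_nth v) /= -e nth_index //.
  by rewrite -index_mem e ltn_ord.
pose F (i k : 'I_N) : option 'I_N :=
  if (i < n) && (k < n) then
    (if index (op (j i) (j k)) u < n then insub (index (op (j i) (j k)) u) else None)
  else None.
have FS : forall i k l, F i k = Some l ->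
   [/\ i < n, k < n, index (op (j i) (j k)) u < n & val l = index (op (j i) (j k)) u].
  move=> i k l; rewrite /F; case: (i < n) => //; case: (k < n) => //=.
  case: ifP => // hn; case: insubP => // l' _ vl [<-]; by rewrite vl.
have Fval : forall i k l, F i k = Some l -> j l = op (j i) (j k).
  by move=> i k l /FS [_ _ _ vl]; apply: idxj; rewrite vl.
have ri : rowinj F.
  move=> r c c' e; case e1: (F r c) => [l|] // _.
  have := Fval _ _ _ e1; rewrite e in e1; rewrite (Fval _ _ _ e1) => /lcancel.
  by move/jinj.
have ci : colinj F.
  move=> r r' c e; case e1: (F r c) => [l|] // _.
  have := Fval _ _ _ e1; rewrite e in e1; rewrite (Fval _ _ _ e1) => /rcancel.
  by move/jinj.
have emp : forall (r : 'I_N) c, n <= r -> F r c = None.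
  by move=> r c; rewrite /F leqNgt => /negbTE ->.
have colF : forall r c, F r c != None -> c < n.
  by move=> r c; case e: (F r c) => [l|] // _; case: (FS _ _ _ e).
have hyp' : 3 * n <= N \/ forall (r : 'I_N) c, r < n -> F r c != None.
  case: hyp => [h|[nN' all]]; [by left|right] => r c rn.
  have cn : c < n by rewrite nN'.
  have vn : index (op (j r) (j c)) u < n by rewrite nN' index_mem.
  rewrite /F rn cn vn /=; case: insubP => //; by rewrite (leq_trans vn nN).
have [G [riG ciG extG fullG]] := complete ri ci emp colF hyp'.
pose L (r c : 'I_N) := odflt r (G r c).
have LG : forall r c, G r c = Some (L r c).
  by move=> r c; rewrite /L; have := fullG r c; case: (G r c).
exists L; split => //.
- apply: latin_quasi.
  + by move=> r c c' e; apply: (riG r); rewrite !LG ?e.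
  + by move=> c r r' e; apply: (ciG r r' c); rewrite !LG ?e.
- move=> x y Cx Cy Cxy.
  have xn := Cn _ Cx; have yn := Cn _ Cy; have vn := Cn _ Cxy.
  rewrite !jidx in xn yn.
  have : F x y = insub (index (op (j x) (j y)) u) by rewrite /F xn yn vn.
  case: insubP => [l _ vl|]; last by rewrite (leq_trans vn nN).
  move=> /extG; rewrite LG => -[->]; exact: idxj.
- move=> c Cc; have cn := Cn _ Cc.
  exists (Ordinal (leq_trans cn nN)); exact: idxj.
Qed.
End Core.
End Comb.

Local Open Scope classical_set_scope.

Lemma discrete_compact_finite (T : discreteTopologicalType) (C : set T) :
  compact C -> finite_set C.
Proof.
move=> cC; apply: contrapT => infC.
pose F := fun B : set T => finite_set (C `\` B).
have FF : Filter F.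
  split.
  - by rewrite /F setDT.
  - move=> A B FA FB; rewrite /F setDIr finite_setU; by split.
  - by move=> A B AB FA; apply: sub_finite_set FA => x [Cx nAx]; split => // /AB.
have PF : ProperFilter F.
  apply: Build_ProperFilter => //; by rewrite /F setD0.
have FC : F C by rewrite /F setDv.
have [p [Cp clp]] := cC F PF FC.
have := clp (C `\` [set p]) [set p].
case.
- rewrite /F; apply: sub_finite_set (finite_set1 p) => x [Cx] /= H; by apply: contrapT => H2; apply: H.
- exact: discrete_set1.
- move=> x [[_ /= xp] /= xe]; exact: xp xe.
Qed.

Theorem proposition4 (T : discreteTopologicalType) (op : T -> T -> T) :
  is_quasigroup op -> approximable_by_finite_quasigroups op.
Proof.
move=> qop C U cC [Uopen Ucov].
have [s0 Cs0] := (finite_seqP C).1 (discrete_compact_finite cC).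
set s := undup s0.
have Cs : forall x, C x -> x \in s by move=> x; rewrite Cs0 /= mem_undup.
have ext : forall k, (exists t, uniq (s ++ t) /\ size t = k) \/
                     (exists v : seq T, uniq v /\ forall x, x \in v).
  elim => [|k [[t [ut st]]|H]]; last by right.
    by left; exists [::]; rewrite cats0 undup_uniq.
  case: (pselect (exists x, x \notin s ++ t)) => [[x xn]|nx].
    left; exists (rcons t x); split; last by rewrite size_rcons st.
    by rewrite -rcons_cat rcons_uniq xn ut.
  right; exists (s ++ t); split => // x.
  by apply/negPn/negP => h; apply: nx; exists x.
have [u [n [uu nN hyp Cn]]] : exists (u : seq T) n, [/\ uniq u, n <= size u,
    (3 * n <= size u \/ (n = size u /\ forall x, x \in u)) &
    (forall x, C x -> index x u < n)].
  case: (ext (2 * size s)) => [[t [ut st]]|[v [uv allv]]].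
    exists (s ++ t), (size s); rewrite size_cat st; split => //.
    - by rewrite leq_addr.
    - by left; rewrite mulSn.
    - by move=> x /Cs xs; rewrite index_cat xs index_mem.
  exists v, (size v); split => //; first by right.
  by move=> x _; rewrite index_mem.
have [hop [qh jinj jex jsurj]] := Comb.core qop uu nN hyp Cn.
exists ('I_(size u) : finType), hop, (tnth (in_tuple u)); split; first exact: qh; split; first exact: jinj; split.
- move=> V _ [c [Vc Cc]]; have [h hc] := jsurj c Cc; exists h; by rewrite hc.
- move=> x y Cx Cy Cxy; have [V UV Vv] := Ucov _ Cxy.
  exists V => //; by rewrite jex.
Qed.
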